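(* Let $p$ be an odd prime, let $n=s=m=2$, and let $a,b,c,d,e,f\in\mathbb{Z}_p\setminus\{0\}$ be such that each of the pairs $(a,b)$, $(c,d)$, $(e,f)$ satisfies the quadratic reciprocity law. Put $k_s=k(a,b)$, $k_n=k(c,d)$, $k_m=k(e,f)$. Then $T_{RN}$ is invertible over $\mathbb{Z}_p$ if and only if, for some labelling $\{k_1,k_2,k_3\}=\{k_n,k_s,k_m\}$ (as a multiset), one of the following holds: (i) $k_1\equiv k_2\equiv k_3\pmod p$ and $p\ne3$; (ii) $k_1\equiv k_2\not\equiv k_3\pmod p$ and $k_3\not\equiv\pm2k_1\pmod p$; (iii) $k_1,k_2,k_3$ are pairwise distinct modulo $p$ and $k_3\not\equiv\pm(k_1+k_2)$ and $k_3\not\equiv\pm(k_1-k_2)\pmod p$.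
   Context: $\mathbb{Z}_p=\{0,1,\dots,p-1\}$ is the field with $p$ elements. For $k\ge1$ and $t_1,t_2\in\mathbb{Z}_p$, $S_k(t_1,t_2)$ is the $k\times k$ tridiagonal matrix with zeros on the main diagonal, every subdiagonal entry (positions $(i+1,i)$) equal to $t_1$, and every superdiagonal entry (positions $(i,i+1)$) equal to $t_2$. $I_r$ is the $r\times r$ identity and $\otimes$ the Kronecker product. $M_s=I_s\otimes S_n(c,d)+S_s(a,b)\otimes I_n$ and $T_{RN}=I_m\otimes M_s+S_m(f,e)\otimes I_{ns}$, with entries in $\mathbb{Z}_p$. A pair $(t_1,t_2)\in\mathbb{Z}_p\times\mathbb{Z}_p$ satisfies the quadratic reciprocity law if either $t_1=t_2$, or $t_1t_2\equiv t^2\pmod p$ for some $t\in\mathbb{Z}_p$ (for nonzero $t_1,t_2$: both are quadratic residues or both are non-residues). For such a pair, $k(t_1,t_2)=t_1$ if $t_1=t_2$, and otherwise $k(t_1,t_2)=\min\{t\in\{0,\dots,p-1\}: t^2\equiv t_1t_2\pmod p\}$. *)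

(* Defs.v *)
From HB Require Import structures.
From mathcomp Require Import all_boot all_order all_algebra.
Set Implicit Arguments. Unset Strict Implicit. Unset Printing Implicit Defensive.
Import GRing.Theory.
Local Open Scope ring_scope.

(* Index helpers for the Kronecker product: row index i of an (m*n)-sized
   matrix corresponds to the pair (i %/ n, i %% n). *)
Lemma kron_div_lt m n (i : 'I_(m * n)) : (i %/ n < m)%N.
Proof.
case: i => i /=; case: n => [|n]; first by rewrite muln0.
by move=> hi; rewrite ltn_divLR.
Qed.

Lemma kron_mod_lt m n (i : 'I_(m * n)) : (i %% n < n)%N.
Proof.
case: i => i /=; case: n => [|n]; first by rewrite muln0.
by move=> _; rewrite ltn_pmod.
Qed.

Definition kdiv m n (i : 'I_(m * n)) : 'I_m := Ordinal (kron_div_lt i).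
Definition kmod m n (i : 'I_(m * n)) : 'I_n := Ordinal (kron_mod_lt i).

Definition kron (R : pzRingType) m1 n1 m2 n2
  (A : 'M[R]_(m1, n1)) (B : 'M[R]_(m2, n2)) : 'M[R]_(m1 * m2, n1 * n2) :=
  \matrix_(i, j) (A (kdiv i) (kdiv j) * B (kmod i) (kmod j)).

Definition Smx (R : pzRingType) (k : nat) (t1 t2 : R) : 'M[R]_k :=
  \matrix_(i, j) (if val i == (val j).+1 then t1
                  else if val j == (val i).+1 then t2 else 0).

Definition Ms (R : pzRingType) (n s : nat) (a b c d : R) : 'M[R]_(s * n) :=
  kron (1%:M : 'M[R]_s) (Smx n c d) + kron (Smx s a b) (1%:M : 'M[R]_n).

Definition TRN (R : pzRingType) (n s m : nat) (a b c d e f : R)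
  : 'M[R]_(m * (s * n)) :=
  kron (1%:M : 'M[R]_m) (Ms n s a b c d)
  + kron (Smx m f e) (1%:M : 'M[R]_(s * n)).

Definition qrl (p : nat) (t1 t2 : 'F_p) : Prop :=
  t1 = t2 \/ exists t : 'F_p, t ^+ 2 = t1 * t2.

Definition kfun (p : nat) (t1 t2 : 'F_p) : nat :=
  if t1 == t2 then val t1
  else find (fun t : nat => (t%:R : 'F_p) ^+ 2 == t1 * t2) (iota 0 p).

Definition modF (p : nat) (k : nat) : 'F_p := k%:R.

(* Main.v *)
Require Import Defs.
From HB Require Import structures.
From mathcomp Require Import all_boot all_order all_algebra.
From mathcomp Require Import ring.
Import GRing.Theory.
Local Open Scope ring_scope.
Set Implicit Arguments. Unset Strict Implicit.

Definition Tx {R : comNzRingType} (a b c d e f : R) (i j : nat) : R :=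
  match i, j with
  | 0, 1 => (d)
  | 0, 2 => (b)
  | 0, 4 => (e)
  | 1, 0 => (c)
  | 1, 3 => (b)
  | 1, 5 => (e)
  | 2, 0 => (a)
  | 2, 3 => (d)
  | 2, 6 => (e)
  | 3, 1 => (a)
  | 3, 2 => (c)
  | 3, 7 => (e)
  | 4, 0 => (f)
  | 4, 5 => (d)
  | 4, 6 => (b)
  | 5, 1 => (f)
  | 5, 4 => (c)
  | 5, 7 => (b)
  | 6, 2 => (f)
  | 6, 4 => (a)
  | 6, 7 => (d)
  | 7, 3 => (f)
  | 7, 5 => (a)
  | 7, 6 => (c)
  | _, _ => 0
  end.

Definition Rx {R : comNzRingType} (a b c d e f : R) (i j : nat) : R :=
  match i, j with
  | 0, 1 => (-(d*e*f) + c*d^+2 + -(a*b*d))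
  | 0, 2 => (-(b*e*f) + -(b*c*d) + a*b^+2)
  | 0, 4 => (e^+2*f + -(c*d*e) + -(a*b*e))
  | 0, 7 => ((2%:R)*b*d*e)
  | 1, 0 => (-(c*e*f) + c^+2*d + -(a*b*c))
  | 1, 3 => (-(b*e*f) + -(b*c*d) + a*b^+2)
  | 1, 5 => (e^+2*f + -(c*d*e) + -(a*b*e))
  | 1, 6 => ((2%:R)*b*c*e)
  | 2, 0 => (-(a*e*f) + -(a*c*d) + a^+2*b)
  | 2, 3 => (-(d*e*f) + c*d^+2 + -(a*b*d))
  | 2, 5 => ((2%:R)*a*d*e)
  | 2, 6 => (e^+2*f + -(c*d*e) + -(a*b*e))
  | 3, 1 => (-(a*e*f) + -(a*c*d) + a^+2*b)
  | 3, 2 => (-(c*e*f) + c^+2*d + -(a*b*c))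
  | 3, 4 => ((2%:R)*a*c*e)
  | 3, 7 => (e^+2*f + -(c*d*e) + -(a*b*e))
  | 4, 0 => (e*f^+2 + -(c*d*f) + -(a*b*f))
  | 4, 3 => ((2%:R)*b*d*f)
  | 4, 5 => (-(d*e*f) + c*d^+2 + -(a*b*d))
  | 4, 6 => (-(b*e*f) + -(b*c*d) + a*b^+2)
  | 5, 1 => (e*f^+2 + -(c*d*f) + -(a*b*f))
  | 5, 2 => ((2%:R)*b*c*f)
  | 5, 4 => (-(c*e*f) + c^+2*d + -(a*b*c))
  | 5, 7 => (-(b*e*f) + -(b*c*d) + a*b^+2)
  | 6, 1 => ((2%:R)*a*d*f)
  | 6, 2 => (e*f^+2 + -(c*d*f) + -(a*b*f))
  | 6, 4 => (-(a*e*f) + -(a*c*d) + a^+2*b)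
  | 6, 7 => (-(d*e*f) + c*d^+2 + -(a*b*d))
  | 7, 0 => ((2%:R)*a*c*f)
  | 7, 3 => (e*f^+2 + -(c*d*f) + -(a*b*f))
  | 7, 5 => (-(a*e*f) + -(a*c*d) + a^+2*b)
  | 7, 6 => (-(c*e*f) + c^+2*d + -(a*b*c))
  | _, _ => 0
  end.

Lemma TRN_E (R : comNzRingType) (a b c d e f : R) :
  TRN 2 2 2 a b c d e f = \matrix_(i, j) Tx a b c d e f (val i) (val j).
Proof.
apply/matrixP => -[i hi] [j hj]; rewrite !mxE.
do 8?[case: i hi => [|i] hi]; do 8?[case: j hj => [|j] hj];
  rewrite /= ?mxE /= ?mulr1 ?mul1r ?mulr0 ?mul0r ?addr0 ?add0r //.
Qed.

Definition Qx {R : comNzRingType} (a b c d e f : R) : R :=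
  (e*f)^+2 + (a*b)^+2 + (c*d)^+2 - 2%:R * ((e*f) * (a*b) + (a*b) * (c*d) + (c*d) * (e*f)).

Lemma TR_E (R : comNzRingType) (a b c d e f : R) :
  (\matrix_(i, j) Tx a b c d e f (val i) (val j) : 'M_8) *m
  (\matrix_(i, j) Rx a b c d e f (val i) (val j)) = (Qx a b c d e f)%:M.
Proof.
apply/matrixP => -[i hi] [j hj]; rewrite !mxE.
rewrite !big_ord_recl big_ord0 !mxE /=.
do 8?[case: i hi => [|i] hi]; do 8?[case: j hj => [|j] hj]; rewrite /Qx /=; try ring; by have := hi; rewrite !ltnS ltn0.
Qed.

Definition vx {R : comNzRingType} (e b d l1 l2 l3 : R) (i : nat) : R :=
  match i with
  | 0 => e * b * d
  | 1 => e * b * l3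
  | 2 => e * l2 * d
  | 3 => e * l2 * l3
  | 4 => l1 * b * d
  | 5 => l1 * b * l3
  | 6 => l1 * l2 * d
  | 7 => l1 * l2 * l3
  | _ => 0
  end.

Lemma Tv_E (F : fieldType) (a b c d e f l1 l2 l3 : F) :
  e != 0 -> b != 0 -> d != 0 ->
  f = l1^+2 / e -> a = l2^+2 / b -> c = l3^+2 / d -> l3 = - (l1 + l2) ->
  (\matrix_(i, j) Tx a b c d e f (val i) (val j) : 'M_8) *m
  (\col_i vx e b d l1 l2 l3 (val i)) = 0.
Proof.
move=> he hb hd -> -> -> ->.
apply/matrixP => -[i hi] [j hj]; rewrite !mxE.
rewrite !big_ord_recl big_ord0 !mxE /=.
do 8?[case: i hi => [|i] hi]; rewrite /=; try (field; by rewrite ?he ?hb ?hd).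
Qed.


Definition P {F : comNzRingType} (x1 x2 x3 : F) : F :=
  (x1 + x2 + x3) * (x1 + x2 - x3) * (x1 - x2 + x3) * (x1 - x2 - x3).

Lemma unitP (F : fieldType) (a b c d e f l1 l2 l3 : F) :
  e != 0 -> b != 0 -> d != 0 ->
  l1^+2 = e*f -> l2^+2 = a*b -> l3^+2 = c*d ->
  (TRN 2 2 2 a b c d e f \in unitmx) <-> P l1 l2 l3 != 0.
Proof.
move=> he hb hd h1 h2 h3.
have QP : Qx a b c d e f = P l1 l2 l3 by rewrite /Qx /P -h1 -h2 -h3; ring.
rewrite TRN_E; split.
- move=> hU; apply/negP => hP0.
  have [s2 [s3 [hs2 [hs3 hs]]]] : exists s2 s3 : F,
      s2^+2 = a*b /\ s3^+2 = c*d /\ l1 + s2 + s3 = 0.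
    move: hP0; rewrite /P !mulf_eq0 => /orP[/orP[/orP[]|]|] /eqP H.
    + by exists l2, l3.
    + by exists l2, (-l3); rewrite sqrrN; split => //; split => //; rewrite -H; ring.
    + by exists (-l2), l3; rewrite sqrrN; split => //; split => //; rewrite -H; ring.
    + by exists (-l2), (-l3); rewrite !sqrrN; split => //; split => //; rewrite -H; ring.
  have hTv := @Tv_E F a b c d e f l1 s2 s3 he hb hd.
  have := hTv (ltac:(by rewrite h1 [e * f]mulrC mulfK)) (ltac:(by rewrite hs2 mulfK))
    (ltac:(by rewrite hs3 mulfK)).
  have -> : s3 = -(l1 + s2).
    have -> : s3 = (l1 + s2 + s3) - (l1 + s2) by ring.
    by rewrite hs sub0r.
  move=> /(_ erefl) hT0.
  have := mulKmx hU (\col_i vx e b d l1 s2 (-(l1 + s2)) (val i)).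
  rewrite hT0 mulmx0 => /matrixP /(_ ord0 ord0); rewrite !mxE /= => /eqP.
  by rewrite eq_sym !mulf_eq0 (negbTE he) (negbTE hb) (negbTE hd).
- move=> hP.
  have hTR := TR_E a b c d e f; rewrite QP in hTR.
  have : (\matrix_(i, j) Tx a b c d e f (val i) (val j) : 'M_8) *m
     ((P l1 l2 l3)^-1 *: \matrix_(i, j) Rx a b c d e f (val i) (val j)) = 1%:M.
    by rewrite -scalemxAr hTR scale_scalar_mx mulVf.
  by case/mulmx1_unit.
Qed.


Lemma natr_valFp p (hp : prime p) (x : 'F_p) : ((val x)%:R : 'F_p) = x.
Proof.
apply: val_inj; rewrite /= val_Fp_nat // modn_small //.
by apply: leq_trans (ltn_ord x) _; rewrite Fp_cast.
Qed.

Lemma kfun_sq p (hp : prime p) (t1 t2 : 'F_p) :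
  qrl t1 t2 -> modF p (kfun t1 t2) ^+ 2 = t1 * t2.
Proof.
rewrite /kfun /modF; case: eqP => [-> _ | ne [//|[t ht]]].
  by rewrite natr_valFp // expr2.
have H : has (fun t : nat => (t%:R : 'F_p) ^+ 2 == t1 * t2) (iota 0 p).
  apply/hasP; exists (val t); last by rewrite natr_valFp // ht.
  by rewrite mem_iota add0n /=; apply: leq_trans (ltn_ord t) _; rewrite Fp_cast.
have := nth_find 0%N H; rewrite nth_iota ?add0n; first by move/eqP.
by move: H; rewrite has_find size_iota.
Qed.

Lemma Pne (F : fieldType) (x1 x2 x3 : F) :
  P x1 x2 x3 != 0 <->
  [/\ x3 <> x1 + x2, x3 <> -(x1 + x2), x3 <> x1 - x2 & x3 <> -(x1 - x2)].
Proof.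
have E1 : x1 + x2 + x3 = x3 - (-(x1 + x2)) by ring.
have E2 : x1 + x2 - x3 = - (x3 - (x1 + x2)) by ring.
have E3 : x1 - x2 + x3 = x3 - (-(x1 - x2)) by ring.
have E4 : x1 - x2 - x3 = - (x3 - (x1 - x2)) by ring.
rewrite /P E1 E2 E3 E4 !mulf_eq0 !oppr_eq0 !subr_eq0 !negb_or.
split.
- by case/andP => /andP [] /andP [] /eqP h1 /eqP h2 /eqP h3 /eqP h4.
- by case => /eqP h1 /eqP h2 /eqP h3 /eqP h4; rewrite h1 h2 h3 h4.
Qed.

Definition Qs p (s : seq nat) : 'F_p :=
  2%:R * \sum_(k <- s) (modF p k) ^+ 4 - (\sum_(k <- s) (modF p k) ^+ 2) ^+ 2.

Lemma Qs3 p (k1 k2 k3 : nat) :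
  Qs p [:: k1; k2; k3] = P (modF p k1) (modF p k2) (modF p k3).
Proof. rewrite /Qs !big_cons !big_nil /P; ring. Qed.

Lemma Psym12 (F : fieldType) (x1 x2 x3 : F) : P x1 x2 x3 = P x2 x1 x3.
Proof. rewrite /P; ring. Qed.
Lemma Psym13 (F : fieldType) (x1 x2 x3 : F) : P x1 x2 x3 = P x3 x2 x1.
Proof. rewrite /P; ring. Qed.
Lemma Psym23 (F : fieldType) (x1 x2 x3 : F) : P x1 x2 x3 = P x1 x3 x2.
Proof. rewrite /P; ring. Qed.

Lemma three_ne0 p (hp : prime p) : p <> 3%N -> (3%:R : 'F_p) != 0.
Proof.
move=> h3; rewrite -(dvdn_pcharf (pchar_Fp hp)); apply/negP => hd.
have := dvdn_leq (isT : (0 < 3)%N) hd; have := prime_gt1 hp.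
move: hd h3; case: p hp => [|[|[|[|p]]]] //.
Qed.

Lemma two_ne0 p (hp : prime p) (hodd : odd p) : (2%:R : 'F_p) != 0.
Proof.
rewrite -(dvdn_pcharf (pchar_Fp hp)); apply/negP => hd.
have := dvdn_leq (isT : (0 < 2)%N) hd; have := prime_gt1 hp.
move: hodd; case: p hp hd => [|[|[|p]]] //.
Qed.


Lemma perm1 (x y z : nat) : perm_eq [:: y; z; x] [:: x; y; z].
Proof. by have := perm_rot 1 [:: x; y; z]; rewrite /rot /= => ->. Qed.
Lemma perm2 (x y z : nat) : perm_eq [:: x; z; y] [:: x; y; z].
Proof. by rewrite perm_cons (perm_catC [:: z] [:: y]). Qed.

Lemma neq_help (F : fieldType) (x y c z : F) :
  x - y = c * z -> c != 0 -> z != 0 -> x <> y.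
Proof.
move=> h hc hz hxy; move: h; rewrite hxy subrr => /esym/eqP.
by rewrite mulf_eq0 (negbTE hc) (negbTE hz).
Qed.

Lemma sq_nz (F : fieldType) (x t1 t2 : F) : x ^+ 2 = t1 * t2 -> t1 != 0 -> t2 != 0 -> x != 0.
Proof.
move=> h h1 h2; apply/negP => /eqP hx; move: h; rewrite hx expr0n /= => /esym/eqP.
by rewrite mulf_eq0 (negbTE h1) (negbTE h2).
Qed.

Unset Implicit Arguments.
Theorem corollary3p4 (p : nat) (hp : prime p) (hodd : odd p)
  (a b c d e f : 'F_p)
  (ha : a != 0) (hb : b != 0) (hc : c != 0) (hd : d != 0)
  (he : e != 0) (hf : f != 0)
  (hab : qrl a b) (hcd : qrl c d) (hef : qrl e f) :
  let ks := kfun a b in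
  let kn := kfun c d in
  let km := kfun e f in
  (TRN 2 2 2 a b c d e f \in unitmx) <->
  exists k1 k2 k3 : nat,
    perm_eq [:: k1; k2; k3] [:: kn; ks; km] /\
    [\/ (modF p k1 = modF p k2 /\ modF p k2 = modF p k3 /\ p <> 3%N),
        (modF p k1 = modF p k2 /\ modF p k1 <> modF p k3 /\
         modF p k3 <> 2 * modF p k1 /\ modF p k3 <> - (2 * modF p k1))
      | (modF p k1 <> modF p k2 /\ modF p k1 <> modF p k3 /\
         modF p k2 <> modF p k3 /\
         modF p k3 <> modF p k1 + modF p k2 /\
         modF p k3 <> - (modF p k1 + modF p k2) /\
         modF p k3 <> modF p k1 - modF p k2 /\
         modF p k3 <> - (modF p k1 - modF p k2))].
Proof.
move=> ks kn km.
have hm := kfun_sq hp hef; have hs := kfun_sq hp hab; have hn := kfun_sq hp hcd.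
have nzm := sq_nz hm he hf; have nzs := sq_nz hs ha hb; have nzn := sq_nz hn hc hd.
apply: (iff_trans (unitP he hb hd hm hs hn)).
have two := two_ne0 hp hodd.
have m1 : (-1 : 'F_p) != 0 by rewrite oppr_eq0 oner_eq0.
split.
- move=> hP; have {}hP : P (modF p kn) (modF p ks) (modF p km) != 0 by rewrite Psym13.
  case: (eqVneq (modF p kn) (modF p ks)) => [e1|n1];
  case: (eqVneq (modF p ks) (modF p km)) => [e2|n2];
  case: (eqVneq (modF p kn) (modF p km)) => [e3|n3].
  + exists kn, ks, km; split => //; apply: Or31; split => //; split => // p3.
    have h3 : (3%:R : 'F_p) == 0 by rewrite -(dvdn_pcharf (pchar_Fp hp)) p3.
    move/Pne: hP => [_ H _ _]; apply: H; apply/eqP; rewrite -subr_eq0.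
    rewrite e1 e2.
    have -> : modF p km - - (modF p km + modF p km) = 3%:R * modF p km by ring.
    by rewrite (eqP h3) mul0r.
  + by rewrite e1 e2 eqxx in n3.
  + by rewrite -e1 e3 eqxx in n2.
  + exists kn, ks, km; split => //; apply: Or32.
    move/Pne: hP => [H1 H2 _ _]; rewrite e1 in H1 H2 *.
    split => //; split; first exact/eqP. split.
    * by move=> H; apply: H1; rewrite H; ring.
    * by move=> H; apply: H2; rewrite H; ring.
  + by rewrite e2 -e3 eqxx in n1.
  + exists ks, km, kn; split.
      exact: perm1.
    apply: Or32.
    have {}hP : P (modF p ks) (modF p km) (modF p kn) != 0 by rewrite -Psym12 -Psym13.
    move/Pne: hP => [H1 H2 _ _]; rewrite e2 in H1 H2 *.
    split => //; split; first by move=> H; move: n1; rewrite e2 H eqxx.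
    split.
    * by move=> H; apply: H1; rewrite H; ring.
    * by move=> H; apply: H2; rewrite H; ring.
  + exists kn, km, ks; split.
      exact: perm2.
    apply: Or32.
    have {}hP : P (modF p kn) (modF p km) (modF p ks) != 0 by rewrite -Psym23.
    move/Pne: hP => [H1 H2 _ _]; rewrite e3 in H1 H2 *.
    split => //; split; first by move=> H; move: n1; rewrite e3 H eqxx.
    split.
    * by move=> H; apply: H1; rewrite H; ring.
    * by move=> H; apply: H2; rewrite H; ring.
  + exists kn, ks, km; split => //; apply: Or33.
    move/Pne: hP => [H1 H2 H3 H4].
    by do !split => //; apply/eqP.
- case=> k1 [k2 [k3 [hperm hcase]]].
  have hQ : P (modF p km) (modF p ks) (modF p kn) =
            P (modF p k1) (modF p k2) (modF p k3).
    by rewrite Psym13 -!Qs3 /Qs !(perm_big _ hperm).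
  rewrite hQ.
  have nzall : forall k, k \in [:: kn; ks; km] -> modF p k != 0.
    by move=> k; rewrite !inE => /or3P[] /eqP ->.
  have nz1 : modF p k1 != 0 by apply: nzall; rewrite -(perm_mem hperm) !inE eqxx.
  have nz2 : modF p k2 != 0 by apply: nzall; rewrite -(perm_mem hperm) !inE eqxx orbT.
  have nz3 : modF p k3 != 0 by apply: nzall; rewrite -(perm_mem hperm) !inE eqxx !orbT.
  apply/Pne.
  case: hcase => [[e12 [e23 p3]] | [e12 [n13 [h2 hm2]]] | [n12 [n13 [n23 [h1 [h2 [h3 h4]]]]]]].
  + rewrite e12 e23; split.
    * by apply: (neq_help (c := -1) (z := modF p k3)) => //; ring.
    * apply: (neq_help (c := 3%:R) (z := modF p k3)) => //; first ring.
      exact: three_ne0.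
    * by apply: (neq_help (c := 1) (z := modF p k3)) => //; try ring; rewrite oner_eq0.
    * by apply: (neq_help (c := 1) (z := modF p k3)) => //; try ring; rewrite oner_eq0.
  + rewrite e12 in h2 hm2 *; split.
    * by move=> H; apply: h2; rewrite H; ring.
    * by move=> H; apply: hm2; rewrite H; ring.
    * by apply: (neq_help (c := 1) (z := modF p k3)) => //; try ring; rewrite oner_eq0.
    * by apply: (neq_help (c := 1) (z := modF p k3)) => //; try ring; rewrite oner_eq0.
  + by split.
Qed.
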